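(* Let $p=(p_1,\dots,p_K)$ be a probability vector with $p_j>0$ for all $j$, and let $q^1,\dots,q^b$ be probability vectors on $\{1,\dots,K\}$ (so $q^\ell_j\in[0,1]$). Then $$\sum_{j=1}^K\frac{p_j}{1-(1-p_j)(1-q^1_j)\cdots(1-q^b_j)}\le\sum_{j=1}^K\frac{p_j}{p_j+q^1_j+q^2_j+\cdots+q^b_j}+1.$$
   Context: In the paper, $p$ is the agent's arm-selection distribution (positive in every coordinate under the algorithm) and $q^\ell$ the distribution of neighbor $\ell$. *)

(* Defs.v *)
From mathcomp Require Import all_boot all_order all_algebra.
Set Implicit Arguments. Unset Strict Implicit. Unset Printing Implicit Defensive.
Import Order.TTheory GRing.Theory Num.Theory.
Local Open Scope ring_scope.

Definition prob_vec (R : realFieldType) (K : nat) (v : 'I_K -> R) : Prop :=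
  (forall j, 0 <= v j) /\ \sum_(j < K) v j = 1.

(* Main.v *)
Require Import Defs.
From mathcomp Require Import all_boot all_order all_algebra.
From mathcomp Require Import lra.
Import Order.TTheory GRing.Theory Num.Theory.
Local Open Scope ring_scope.

Lemma prodL (R : realFieldType) n (f : 'I_n -> R) :
  (forall l, 0 <= f l <= 1) ->
  0 <= \prod_(l < n) (1 - f l) /\
  (\prod_(l < n) (1 - f l)) * (1 + \sum_(l < n) f l) <= 1.
Proof.
elim: n f => [|n IH] f hf; first by rewrite !big_ord0; lra.
rewrite big_ord_recr big_ord_recr /=.
have [h1 h2] := IH (fun l => f (widen_ord (leqnSn n) l)) (fun l => hf _).
have /andP[x0 x1] := hf ord_max.
set P := \prod_(_ < _) _ in h1 h2 *; set s := \sum_(_ < _) _ in h2 *.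
have s0 : 0 <= s by apply: sumr_ge0 => i _; have /andP[] := hf (widen_ord (leqnSn n) i).
split; first nra.
have P1 : P <= 1 by nra.
nra.
Qed.

Lemma perj (R : realFieldType) (p P s : R) :
  0 < p -> p <= 1 -> 0 <= P -> P * (1 + s) <= 1 -> 0 <= s ->
  p / (1 - (1 - p) * P) <= p / (p + s) + p.
Proof.
move=> p0 p1 P0 Ps s0.
set D := 1 - (1 - p) * P.
have hD : D * (1 + s) >= p + s by rewrite /D; nra.
have D0 : 0 < D by nra.
have ps0 : 0 < p + s by lra.
set u := p / (p + s).
have hu : u * (p + s) = p by rewrite /u divfK // gt_eqF.
have u0 : 0 <= u by rewrite /u divr_ge0 // ltW.
rewrite ler_pdivrMr //.
have h : p * (1 + s) <= (u + p) * D * (1 + s) by nra.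
by rewrite ler_pM2r in h; lra.
Qed.

Theorem mainTheorem6 (R : realFieldType) (K b : nat)
  (p : 'I_K -> R) (q : 'I_b -> 'I_K -> R) :
  prob_vec p -> (forall j, 0 < p j) ->
  (forall l, prob_vec (q l)) ->
  \sum_(j < K) p j / (1 - (1 - p j) * \prod_(l < b) (1 - q l j))
  <= \sum_(j < K) p j / (p j + \sum_(l < b) q l j) + 1.
Proof.
move=> [p0 p1] pp hq.
have le1 : forall (v : 'I_K -> R), prob_vec v -> forall j, 0 <= v j <= 1.
  move=> v [v0 v1] j; rewrite v0 /= -v1 (bigD1 j) //= lerDl.
  by apply: sumr_ge0.
rewrite -[X in _ <= _ + X]p1 -big_split /=; apply: ler_sum => j _.
have hf : forall l, 0 <= q l j <= 1 by move=> l; apply: le1.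
have [h1 h2] := @prodL R b (fun l => q l j) hf.
have /andP[_ pj1] := le1 p (conj p0 p1) j.
apply: perj => //.
by apply: sumr_ge0 => l _; have /andP[] := hf l.
Qed.
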